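(* The cocharacter (coweight) lattice \(Y(G(\psi)) = \operatorname{Hom}(\mathbb{G}_m, T_{G(\psi)})\) of \(G(\psi)\) has the following \(\mathbb{Z}\)-basis \(\gamma_0^\vee, \ldots, \gamma_n^\vee\) (elements of \(Y(\mathrm{GL}(W))\otimes\mathbb{Q}\)): \[ \gamma_i^\vee = \begin{cases} \left(\frac{k}{n+1}-1\right)\tau_W^\vee + \psi(e_i^\vee), & 0\le i\le k-2,\\[2pt] \frac{k}{n+1}\,\tau_W^\vee + \psi(e_i^\vee), & k-1\le i\le n.\end{cases} \]
   Context: \(\Bbbk\) is an algebraically closed field of characteristic zero. \(V\) has basis \(e_0,\ldots,e_n\), \(1\le k\le n\), \(G=\mathrm{SL}(V)\) with diagonal maximal torus \(T_G\), \(W=\Lambda^k(V)\) with basis \(e_I=e_{i_1}\wedge\cdots\wedge e_{i_k}\) for \(I=\{i_1<\cdots<i_k\}\), and \(\psi\colon G\to\mathrm{GL}(W)\) the fundamental representation. \(G(\psi)=\psi(G)\cdot Z(\mathrm{GL}(W))\subset\mathrm{GL}(W)\), with maximal torus \(T_{G(\psi)}=\psi(T_G)\cdot Z(\mathrm{GL}(W))\) contained in the diagonal torus \(T_W\) of \(\mathrm{GL}(W)\) (w.r.t. the basis \(e_I\)); so \(Y(G(\psi))\subset Y(T_W)\simeq\mathbb{Z}^{\{I\}}\), and all these lattices sit in \(Y(T_W)\otimes\mathbb{Q}\). \(\tau_W^\vee\colon c\mapsto c\cdot\mathrm{Id}_W\) is the central cocharacter. Let \(\varepsilon_i\) be the cocharacter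 of the diagonal torus of \(\mathrm{GL}(V)\) putting \(c\) in position \(i\) and \(1\) elsewhere. Let \(\omega_j^\vee=\sum_{l<j}\varepsilon_l-\frac{j}{n+1}\sum_{l=0}^n\varepsilon_l\) (\(j=1,\dots,n\)) be the (rational) fundamental coweights of \(\mathrm{SL}(V)\), \(\omega_0^\vee=\omega_{n+1}^\vee=0\), and \(e_i^\vee=\omega_{i+1}^\vee-\omega_i^\vee=\varepsilon_i-\frac1{n+1}\sum_l\varepsilon_l\) for \(i=0,\dots,n\). \(\psi\) is extended \(\mathbb{Q}\)-linearly to rational cocharacters; explicitly \(\psi(e_i^\vee)\) acts on \(e_I\) with weight \([i\in I]-\frac{k}{n+1}\). *)

(* Defs.v *)
From HB Require Import structures.
From mathcomp Require Import all_boot all_order all_algebra.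
Unset Printing Implicit Defensive.
Import Order.TTheory GRing.Theory Num.Theory.
Local Open Scope ring_scope.

(* V has basis e_0..e_n, indexed by 'I_n.+1.  The basis e_I of W = Λ^k V is
   indexed by k-subsets I of {0..n}. *)
Definition kset (n k : nat) := {I : {set 'I_n.+1} | #|I| == k}.

(* An element of the diagonal torus T_W of GL(W) is given by its diagonal
   d : kset n k -> F (entries nonzero).  It lies in
   T_{G(psi)} = psi(T_G) . Z(GL(W)) iff d = z * psi(diag t) with
   t in the diagonal torus of SL(V) (prod t_i = 1) and z a nonzero scalar;
   psi(diag t) acts on e_I by prod_{i in I} t_i. *)
Definition in_TGpsi (F : fieldType) (n k : nat) (d : kset n k -> F) : Prop :=
  exists (t : 'I_n.+1 -> F) (z : F),
    [/\ forall i, t i != 0, \prod_i t i = 1, z != 0 &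
        forall I : kset n k, d I = z * \prod_(i in val I) t i].

(* Y(T_W) = Z^{I}: m gives the cocharacter c |-> diag(c^{m_I}).
   It is a cocharacter of T_{G(psi)} iff its image lies in T_{G(psi)}. *)
Definition cochar_Gpsi (F : fieldType) (n k : nat) (m : kset n k -> int) : Prop :=
  forall c : F, c != 0 -> @in_TGpsi F n k (fun I : kset n k => c ^ m I).

(* Y(G(psi)) viewed inside Y(T_W) (x) Q = Q^{I}. *)
Definition inY (F : fieldType) (n k : nat) (x : kset n k -> rat) : Prop :=
  exists m : kset n k -> int,
    (forall I, x I = (m I)%:~R) /\ @cochar_Gpsi F n k m.

Definition tauW (n k : nat) : kset n k -> rat := fun _ => 1.

(* rational cocharacters of the diagonal torus of GL(V): 'I_n.+1 -> rat
   (coefficients on eps_0..eps_n).  omega_j^vee, with omega_0 = omega_{n+1} = 0. *)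
Definition omega (n j : nat) : 'I_n.+1 -> rat :=
  fun l => (l < j)%N%:R - j%:R / n.+1%:R.

Definition ecow (n : nat) (i : 'I_n.+1) : 'I_n.+1 -> rat :=
  fun l => omega n i.+1 l - omega n i l.

(* Q-linear extension of psi : Y(T_G) -> Y(T_W):
   psi(sum_l y_l eps_l) acts on e_I with weight sum_{l in I} y_l. *)
Definition psiQ (n k : nat) (y : 'I_n.+1 -> rat) : kset n k -> rat :=
  fun I => \sum_(l in val I) y l.

Definition gamma (n k : nat) (i : 'I_n.+1) : kset n k -> rat :=
  fun I =>
    if (i.+2 <= k)%N
    then (k%:R / n.+1%:R - 1) * tauW n k I + psiQ n k (ecow n i) I
    else (k%:R / n.+1%:R) * tauW n k I + psiQ n k (ecow n i) I.

(* Main.v *)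
Require Import Defs.
From HB Require Import structures.
From mathcomp Require Import all_boot all_order all_algebra.
From mathcomp Require Import ring lra zify.
Import Order.TTheory GRing.Theory Num.Theory.
Local Open Scope ring_scope.

Lemma exists_subset (T : finType) (A : {set T}) (j : nat) :
  (j <= #|A|)%N -> exists R : {set T}, R \subset A /\ #|R| = j.
Proof.
elim: j => [|j IH] hj; first by exists set0; rewrite sub0set cards0.
have [R [RA cR]] := IH (ltnW hj).
have : (0 < #|A :\: R|)%N by rewrite cardsD (setIidPr RA) cR subn_gt0.
case/card_gt0P => x; rewrite in_setD => /andP[xR xA].
exists (x |: R); split; first by rewrite subUset sub1set xA RA.
by rewrite cardsU1 xR cR.
Qed.

Definition Rset n k (i : 'I_n.+1) : {set 'I_n.+1} :=
  odflt set0 [pick R : {set 'I_n.+1} | (#|R| == k.-1) && (i \notin R) && (ord0 \notin R)].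

Lemma Rspec n k i : (k <= n)%N ->
  [/\ #|Rset n k i| = k.-1, i \notin Rset n k i & ord0 \notin Rset n k i].
Proof.
move=> hkn; rewrite /Rset; case: pickP => [R /andP[/andP[/eqP ? ?] ?] | H] //.
exfalso.
have hA : (k.-1 <= #|~: [set i; ord0]|)%N.
  have := cardsC [set i; ord0]; rewrite cards2 card_ord; case: (i != ord0) => /=; lia.
have [R [RA cR]] := exists_subset _ _ _ hA.
move: (H R); rewrite cR eqxx /=.
have hi : i \notin R by apply/negP => /(subsetP RA); rewrite in_setC set21.
have h0 : ord0 \notin R by apply/negP => /(subsetP RA); rewrite in_setC set22.
by rewrite hi h0.
Qed.

Lemma cardU1k n k (x : 'I_n.+1) (R : {set 'I_n.+1}) : (1 <= k)%N ->
  #|R| = k.-1 -> x \notin R -> #|x |: R| = k.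
Proof. by move=> hk cR xR; rewrite cardsU1 xR cR; lia. Qed.

Lemma ksetE n k (S : {set 'I_n.+1}) : #|S| = k -> exists I : kset n k, val I = S.
Proof. move=> hS; have hS' : #|S| == k by rewrite hS.
by exists (Sub S hS'); rewrite SubK. Qed.

Lemma cardI n k (I : kset n k) : #|val I| = k.
Proof. exact: (eqP (valP I)). Qed.

Lemma gammaE n k i (I : kset n k) :
  gamma n k i I = (i \in val I)%:R - (i.+2 <= k)%:R.
Proof.
have e : forall l : 'I_n.+1, ecow n i l = (l == i)%:R - (n.+1)%:R^-1.
  move=> l; rewrite /ecow /omega ltnS leq_eqVlt -val_eqE /=.
  have hN : (n.+1)%:R != 0 :> rat by rewrite pnatr_eq0.
  move: hN; set N := (n.+1)%:R => hN.
  rewrite -[(i.+1)%:R]natr1.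
  clearbody N; case: (ltngtP l i) => /= _; field; done.
have hs : psiQ n k (ecow n i) I = (i \in val I)%:R - k%:R / (n.+1)%:R.
  rewrite /psiQ (eq_bigr _ (fun l _ => e l)) sumrB sumr_const cardI.
  rewrite mulr_natl; congr (_ - _).
  case hi: (i \in val I).
    rewrite (bigD1 i) //= eqxx big1 ?addr0 // => l /andP[_ /negbTE ->] //.
  rewrite big1 // => l lI; case: eqP => // li; move: hi; by rewrite -li lI.
rewrite /gamma hs /tauW; case: (i.+2 <= k)%N => /=; ring.
Qed.

Definition lin n k (a : 'I_n.+1 -> int) (S : {set 'I_n.+1}) : int :=
  \sum_(i in S) a i - \sum_(i < n.+1 | (i.+2 <= k)%N) a i.

Lemma sum_gamma n k (a : 'I_n.+1 -> int) (I : kset n k) :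
  \sum_(i < n.+1) (a i)%:~R * gamma n k i I = (lin n k a (val I))%:~R.
Proof.
rewrite /lin rmorphB /= !rmorph_sum /=.
under eq_bigr => i _ do rewrite gammaE mulrBr.
rewrite sumrB; congr (_ - _).
  rewrite [RHS]big_mkcond /=; apply: eq_bigr => i _; case: (i \in val I); by rewrite ?mulr1 ?mulr0.
rewrite [RHS]big_mkcond /=; apply: eq_bigr => i _; case: (i.+2 <= k)%N; by rewrite ?mulr1 ?mulr0.
Qed.

Lemma sum_cond n k (c : 'I_n.+1 -> int) : (k <= n.+1)%N ->
  \sum_(i < n.+1 | (i.+2 <= k)%N) c i = \sum_(i < n.+1 | (i.+2 <= k)%N) c i.
Proof. done. Qed.

Lemma sum_const_cond n k (c : int) : (k <= n.+1)%N ->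
  \sum_(i < n.+1 | (i.+2 <= k)%N) c = c *+ k.-1.
Proof.
move=> hk.
rewrite (eq_bigl (fun i : 'I_n.+1 => true && (i < k.-1)%N)); last first.
  by move=> i /=; lia.
rewrite -(@big_ord_widen_cond _ _ _ k.-1 n.+1 (fun _ => true) (fun _ => c)); last lia.
by rewrite sumr_const card_ord.
Qed.

Lemma two_neq0 (F : fieldType) : [pchar F] =i pred0 -> (2 : F) != 0.
Proof. by move=> hF; rewrite (pcharf0P F).1. Qed.

Lemma pow2_ne1 (F : fieldType) (hF : [pchar F] =i pred0) (n : nat) :
  (2 : F) ^+ n.+1 != 1.
Proof.
apply/negP => /eqP h.
have : ((2 ^ n.+1 - 1)%N%:R : F) == 0.
  by rewrite natrB ?expn_gt0 // natrX h subrr.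
rewrite (pcharf0P F).1 // subn_eq0 => h2.
move: h2; rewrite expnS; have := expn_gt0 2 n; rewrite /=; lia.
Qed.

Lemma expz2_inj (F : fieldType) (hF : [pchar F] =i pred0) (a b : int) :
  (2 : F) ^ a = 2 ^ b -> a = b.
Proof.
move=> h.
have h2 := two_neq0 _ hF.
have e : (2 : F) ^ (a - b) = 1.
  by rewrite expfzDr // -invr_expz h divff // expfz_neq0.
apply/eqP; rewrite -subr_eq0; apply/eqP; move: e.
case: (a - b) => [[|m]|m] //.
  rewrite -exprnP => /eqP; by rewrite (negbTE (pow2_ne1 _ hF m)).
rewrite NegzE -exprnN => /(congr1 GRing.inv); rewrite invrK invr1.
move/eqP; by rewrite (negbTE (pow2_ne1 _ hF m)).
Qed.

Lemma nth_root (F : closedFieldType) (N : nat) (b : F) : (0 < N)%N ->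
  exists x : F, x ^+ N = b.
Proof.
move=> hN.
have [x hx] := @solve_monicpoly F N (fun i => if i == 0%N then b else 0) hN.
exists x; rewrite hx; case: N hN {hx} => // N _.
rewrite big_ord_recl /= expr0 mulr1 big1 ?addr0 // => i _; by rewrite mul0r.
Qed.

Lemma affine n k (hk1 : (1 <= k)%N) (hkn : (k <= n)%N) (m : kset n k -> int) (w : int)
  (a : 'I_n.+1 -> int) :
  (forall I, m I = w + \sum_(i in val I) a i) ->
  exists a', forall I, lin n k a' (val I) = m I.
Proof.
move=> h.
pose C := \sum_(i < n.+1 | (i.+2 <= k)%N) a i.
exists (fun i => a i + (w + C)) => I.
set c := w + C.
have ec : c = w + C by [].
clearbody c.
rewrite /lin !big_split /= sumr_const cardI sum_const_cond; last lia.
rewrite h -/C.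
rewrite (_ : c *+ k = c *+ k.-1 + c); last by rewrite -mulrSr prednK.
rewrite ec; ring.
Qed.

Theorem proposition3p5 (F : closedFieldType) (hF : [pchar F] =i pred0)
  (n k : nat) (hk1 : (1 <= k)%N) (hkn : (k <= n)%N) :
  (forall x : kset n k -> rat,
      inY F n k x <->
      exists a : 'I_n.+1 -> int,
        forall I, x I = \sum_(i < n.+1) (a i)%:~R * gamma n k i I)
  /\
  (forall a : 'I_n.+1 -> int,
      (forall I : kset n k, \sum_(i < n.+1) (a i)%:~R * gamma n k i I = 0) ->
      forall i, a i = 0).
Proof.
split; last first.
  move=> a h i.
  have hl : forall S : {set 'I_n.+1}, #|S| = k -> lin n k a S = 0.
    move=> S /ksetE [I <-]; have := h I; rewrite sum_gamma => /eqP.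
    by rewrite intr_eq0 => /eqP.
  have ha : forall j, a j = a ord0.
    move=> j; have [c1 j1 o1] := Rspec n k j hkn.
    have e1 := hl _ (cardU1k _ _ _ _ hk1 c1 j1).
    have e0 := hl _ (cardU1k _ _ _ _ hk1 c1 o1).
    move: e1 e0; rewrite /lin !big_setU1 //=; lia.
  have [c0 _ o0] := Rspec n k ord0 hkn.
  have e := hl _ (cardU1k _ _ _ _ hk1 c0 o0).
  move: e; rewrite /lin.
  under eq_bigr => j _ do rewrite ha.
  under [X in _ - X]eq_bigr => j _ do rewrite ha.
  rewrite sumr_const sum_const_cond; last lia.
  rewrite (cardU1k _ _ _ _ hk1 c0 o0) ha.
  rewrite -{1}(prednK hk1) mulrSr; lia.
move=> x; split.
  case=> m [hx hm].
  have h2 := two_neq0 _ hF.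
  have [t [z [ht hp hz hd]]] := hm 2 h2.
  pose mm (S : {set 'I_n.+1}) : int := oapp m 0 (insub S : option (kset n k)).
  have mmE : forall I : kset n k, mm (val I) = m I by move=> I; rewrite /mm valK.
  have hdS : forall S : {set 'I_n.+1}, #|S| = k -> 2 ^ mm S = z * \prod_(l in S) t l.
    by move=> S /ksetE [I <-]; rewrite mmE hd.
  pose R := Rset n k.
  pose p := ord0 : 'I_n.+1.
  pose a i := mm (i |: R i) - mm (p |: R i).
  pose B := p |: R p.
  have hB : #|B| = k.
    by have [c0 _ o0] := Rspec n k p hkn; apply: cardU1k.
  pose w := mm B - \sum_(j in B) a j.
  have mor : {morph (fun e : int => (2 : F) ^ e) : x y / x + y >-> x * y}.
    by move=> u v; rewrite expfzDr.
  have P1 : forall X : {set 'I_n.+1}, #|X| = k ->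
      \prod_(i in X) (2 : F) ^ mm (i |: R i)
      = z ^+ k * \prod_(i in X) t i * \prod_(i in X) \prod_(l in R i) t l.
    move=> X hX.
    rewrite (eq_bigr (fun i => z * (t i * \prod_(l in R i) t l))); last first.
      move=> i _; have [c1 i1 _] := Rspec n k i hkn.
      by rewrite hdS ?(cardU1k _ _ _ _ hk1 c1 i1) // big_setU1.
    by rewrite !big_split /= prodr_const hX mulrA.
  have P2 : forall X : {set 'I_n.+1}, #|X| = k ->
      \prod_(i in X) (2 : F) ^ mm (p |: R i)
      = z ^+ k * t p ^+ k * \prod_(i in X) \prod_(l in R i) t l.
    move=> X hX.
    rewrite (eq_bigr (fun i => z * (t p * \prod_(l in R i) t l))); last first.
      move=> i _; have [c1 _ o1] := Rspec n k i hkn.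
      by rewrite hdS ?(cardU1k _ _ _ _ hk1 c1 o1) // big_setU1.
    by rewrite !big_split /= !prodr_const hX mulrA.
  have key : forall S : {set 'I_n.+1}, #|S| = k -> mm S = w + \sum_(i in S) a i.
    move=> S hS.
    have E : mm S + \sum_(i in S) mm (p |: R i) + \sum_(j in B) mm (j |: R j)
           = mm B + \sum_(i in S) mm (i |: R i) + \sum_(j in B) mm (p |: R j).
      apply: (expz2_inj _ hF).
      rewrite !expfzDr //.
      rewrite !(big_morph _ mor (expr0z 2)).
      rewrite P1 // P2 // P1 // P2 // hdS // hdS //.
      ring.
    rewrite /w /a !sumrB.
    set X1 := \sum_(i in S) mm (p |: R i) in E *.
    set Y1 := \sum_(j in B) mm (j |: R j) in E *.
    have -> : mm S = (mm S + X1 + Y1) - X1 - Y1 by ring.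
    rewrite E; ring.
  have [a' ha'] := affine n k hk1 hkn m w a (fun I => etrans (esym (mmE I)) (key _ (cardI _ _ I))).
  by exists a' => I; rewrite hx sum_gamma ha'.
case=> a ha.
exists (fun I => lin n k a (val I)); split; first by move=> I; rewrite ha sum_gamma.
move=> c hc.
pose s := \sum_(i < n.+1) a i.
pose C := \sum_(i < n.+1 | (i.+2 <= k)%N) a i.
have [lam hl] := nth_root F n.+1 (c ^ (- s)) (ltn0Sn n).
have lnz : lam != 0.
  apply/eqP => l0; move: hl; rewrite l0 expr0n /= => /esym/eqP.
  by rewrite (negbTE (expfz_neq0 _ hc)).
have mor : {morph (fun e : int => c ^ e) : x y / x + y >-> x * y}.
  by move=> u v; rewrite expfzDr.
exists (fun i => c ^ a i * lam), (c ^ (- C) / lam ^+ k); split.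
- by move=> i; rewrite mulf_neq0 // expfz_neq0.
- rewrite big_split /= prodr_const card_ord hl -(big_morph _ mor (expr0z c)).
  by rewrite -expfzDr // addrN expr0z.
- by rewrite mulf_neq0 ?expfz_neq0 ?invr_eq0 ?expf_neq0.
- move=> I; rewrite big_split /= prodr_const cardI -(big_morph _ mor (expr0z c)).
  rewrite /lin expfzDr // -/C.
  have : lam ^+ k != 0 by rewrite expf_neq0.
  by move=> hk; field.
Qed.
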